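(* Let $\sigma_2:[n]\to\{\pm1\}$ be an extended string and $\sigma_1\preceq\sigma_2$ a sign string. Let $L^{\sigma_2}_{\sigma_1}\subset\mathbb{R}^n$ be the set of all $x=(x_1,\dots,x_n)$ such that $\sigma_2(k)x_k\le0$ and $|x_k|\le1$ for all $k\in[n]$, and such that, if $k_1<\dots<k_l$ are all the indices $k\in[n]$ with $x_k=0$, then $\sigma_1$ is the reduced string of $\tau:[l]\to\{\pm1\}$, $\tau(i)=\sigma_2(k_i)$. Then $L^{\sigma_2}_{\sigma_1}$ is contractible.
   Context: $[n]=\{1,\dots,n\}$; signs $\pm$ are identified with $\pm1$. An extended string is any function $\tau:[l]\to\{\pm1\}$ with $l\ge2$ (signs may repeat); its length is $|\tau|=l$. A sign string is an extended string whose consecutive values alternate (i.e. $\tau(j+1)=-\tau(j)$ for all $j$). For extended strings $\tau_1:[l_1]\to\{\pm1\}$, $\tau_2:[l_2]\to\{\pm1\}$, $\tau_1\preceq\tau_2$ ($\tau_1$ is a substring of $\tau_2$) if $\tau_1=\tau_2\circ f$ for some strictly increasing $f:[l_1]\to[l_2]$; $\tau_1\prec\tau_2$ if moreover $\tau_1\ne\tau_2$. The reduced string of an extended string $\tau$ is the unique sign string of maximal length which is a substring of $\tau$ (obtained by deleting repetitions of consecutive equal signs). When $l<2$ the condition ''$\sigma_1$ is the reduced string of $\tau$'' is understood to fail. *)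

(* Defs.v *)
From Stdlib Require Import Reals List Arith.
Import ListNotations.
Open Scope R_scope.

Inductive sign : Set := Pos | Neg.

Definition sgnR (s : sign) : R := match s with Pos => 1 | Neg => -1 end.

Definition opp_sign (s : sign) : sign := match s with Pos => Neg | Neg => Pos end.

(* An extended string tau : [l] -> {+-1} (l >= 2) is represented by the list
   [tau(1); ...; tau(l)] (0-based list positions). *)
Definition ext_string (t : list sign) : Prop := (2 <= length t)%nat.

Definition sign_string (t : list sign) : Prop :=
  ext_string t /\
  forall j : nat, (S j < length t)%nat -> nth (S j) t Pos = opp_sign (nth j t Pos).

Definition substring (t1 t2 : list sign) : Prop :=
  exists f : nat -> nat,
    (forall i j, (i < j < length t1)%nat -> (f i < f j)%nat) /\
    (forall i, (i < length t1)%nat -> (f i < length t2)%nat) /\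
    (forall i, (i < length t1)%nat -> nth i t1 Pos = nth (f i) t2 Pos).

Definition reduced_string_of (s t : list sign) : Prop :=
  ext_string t /\ sign_string s /\ substring s t /\
  forall u, sign_string u -> substring u t -> (length u <= length s)%nat.

(* Points of R^n are represented as x : nat -> R, with coordinates
   x 0, ..., x (n-1) and x k = 0 for k >= n. *)
Definition zero_dec (r : R) : bool := if Req_EM_T r 0 then true else false.

Definition zero_pattern (n : nat) (sigma2 : list sign) (x : nat -> R) : list sign :=
  map (fun k => nth k sigma2 Pos) (filter (fun k => zero_dec (x k)) (seq 0 n)).

Definition Lset (n : nat) (sigma2 sigma1 : list sign) (x : nat -> R) : Prop :=
  (forall k, (n <= k)%nat -> x k = 0) /\
  (forall k, (k < n)%nat -> sgnR (nth k sigma2 Pos) * x k <= 0 /\ Rabs (x k) <= 1) /\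
  reduced_string_of sigma1 (zero_pattern n sigma2 x).

(* Contractibility of a subset A of R^n (subspace topology of the Euclidean
   topology; we use the equivalent sup-metric): there is a point x0 in A and a
   continuous map H : [0,1] x A -> A with H(0,-) = id and H(1,-) = const x0. *)
Definition contractible (n : nat) (A : (nat -> R) -> Prop) : Prop :=
  exists (x0 : nat -> R) (H : R -> (nat -> R) -> (nat -> R)),
    A x0 /\
    (forall t x, 0 <= t <= 1 -> A x -> A (H t x)) /\
    (forall x, A x -> forall k, H 0 x k = x k) /\
    (forall x, A x -> forall k, H 1 x k = x0 k) /\
    (forall t x, 0 <= t <= 1 -> A x ->
       forall eps, 0 < eps -> exists delta, 0 < delta /\
         forall s y, 0 <= s <= 1 -> A y ->
           Rabs (t - s) < delta ->
           (forall k, (k < n)%nat -> Rabs (x k - y k) < delta) ->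
           forall k, (k < n)%nat -> Rabs (H t x k - H s y k) < eps).

(* Main.v *)
Require Import Defs.
From Stdlib Require Import Reals List Arith Lia Lra Classical ClassicalEpsilon.
Import ListNotations.
Open Scope nat_scope.

Definition sign_eqb (a b : sign) : bool :=
  match a, b with Pos, Pos => true | Neg, Neg => true | _, _ => false end.

Lemma sign_eqb_spec a b : sign_eqb a b = true <-> a = b.
Proof. destruct a, b; simpl; split; intro; congruence. Qed.

Lemma opp_neq s : opp_sign s <> s.
Proof. destruct s; discriminate. Qed.

Lemma sign_two a b : a <> b -> b = opp_sign a.
Proof. destruct a, b; simpl; congruence. Qed.

Lemma opp_opp s : opp_sign (opp_sign s) = s.
Proof. destruct s; reflexivity. Qed.

Definition alt (s : sign) (c : nat) : sign := if Nat.even c then s else opp_sign s.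

Lemma alt_S s c : alt s (S c) = opp_sign (alt s c).
Proof. unfold alt. rewrite Nat.even_succ. unfold Nat.odd.
  destruct (Nat.even c); simpl; auto using opp_opp. Qed.

Lemma alt_0 s : alt s 0 = s.
Proof. reflexivity. Qed.

Lemma sign_string_alt t : sign_string t -> forall i, (i < length t)%nat -> nth i t Pos = alt (nth 0 t Pos) i.
Proof.
  intros [_ H] i. induction i; intros Hi; [reflexivity|].
  rewrite H by lia. rewrite IHi by lia. now rewrite alt_S.
Qed.

Lemma choice_nat (R0 : nat -> nat -> Prop) : (forall k, exists i, R0 k i) -> exists g, forall k, R0 k (g k).
Proof.
  intros H. exists (fun k => proj1_sig (constructive_indefinite_description _ (H k))).
  intros k. exact (proj2_sig (constructive_indefinite_description _ (H k))).
Qed.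

Lemma filt_in (b : nat -> bool) a len k : In k (filter b (seq a len)) <-> (a <= k < a + len)%nat /\ b k = true.
Proof. rewrite filter_In, in_seq. tauto. Qed.

Lemma filt_sorted (b : nat -> bool) len : forall a i j, (i < j < length (filter b (seq a len)))%nat ->
  (nth i (filter b (seq a len)) 0%nat < nth j (filter b (seq a len)) 0%nat)%nat.
Proof.
  induction len; intros a i j Hij; simpl in *; [lia|].
  destruct (b a) eqn:Hb; simpl in *.
  - destruct i, j; try lia.
    + assert (Hin: In (nth j (filter b (seq (S a) len)) 0%nat) (filter b (seq (S a) len))) by (apply nth_In; lia).
      apply filt_in in Hin. lia.
    + apply IHlen. lia.
  - apply IHlen; lia.
Qed.

Lemma filt_mono (b : nat -> bool) len a i j : (i <= j < length (filter b (seq a len)))%nat ->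
  (nth i (filter b (seq a len)) 0%nat <= nth j (filter b (seq a len)) 0%nat)%nat.
Proof. intros H. destruct (Nat.eq_dec i j); [subst; lia|]. apply Nat.lt_le_incl, filt_sorted; lia. Qed.

Lemma filt_inj (b : nat -> bool) len a i j : (i < length (filter b (seq a len)))%nat -> (j < length (filter b (seq a len)))%nat ->
  nth i (filter b (seq a len)) 0%nat = nth j (filter b (seq a len)) 0 -> i = j.
Proof.
  intros Hi Hj He. destruct (Nat.lt_total i j) as [h|[h|h]]; auto.
  - pose proof (filt_sorted b len a i j). lia.
  - pose proof (filt_sorted b len a j i). lia.
Qed.

Lemma two_in (l : list nat) a b : In a l -> In b l -> a <> b -> (2 <= length l)%nat.
Proof. destruct l as [|x [|y l]]; simpl; intros H1 H2 H3; try tauto; try lia.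
  all: destruct H1 as [H1|[]]; destruct H2 as [H2|[]]; congruence. Qed.

Definition Adm' (n : nat) (s2 s1 : list sign) (Z : nat -> Prop) : Prop :=
  exists C : nat -> nat,
    (forall k, (k < n)%nat -> Z k -> (C k < length s1)%nat /\ nth k s2 Pos = nth (C k) s1 Pos) /\
    (forall k k', (k <= k')%nat -> (k' < n)%nat -> Z k -> Z k' -> (C k <= C k')%nat) /\
    (forall l, (l < length s1)%nat -> exists k, (k < n)%nat /\ Z k /\ C k = l).

Lemma Adm'_ext n s2 s1 (Z1 Z2 : nat -> Prop) : (forall k, (k < n)%nat -> (Z1 k <-> Z2 k)) -> Adm' n s2 s1 Z1 -> Adm' n s2 s1 Z2.
Proof.
  intros E [C [H1 [H2 H3]]]. exists C. repeat split.
  - apply H1; auto. apply E; auto.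
  - apply H1; auto. apply E; auto.
  - intros k k' ? ? ? ?. apply H2; auto; apply E; auto; lia.
  - intros l Hl. destruct (H3 l Hl) as [k [? [? ?]]]. exists k. repeat split; auto. apply E; auto.
Qed.

Lemma nth_map_nat (g : nat -> sign) (l : list nat) i : i < length l -> nth i (map g l) Pos = g (nth i l 0).
Proof. intros H. rewrite (nth_indep _ Pos (g 0)) by (rewrite length_map; auto). apply map_nth. Qed.

Fixpoint rl (P : list sign) (i : nat) : nat :=
  match i with 0 => 0 | S i' => rl P i' + (if sign_eqb (nth (S i') P Pos) (nth i' P Pos) then 0 else 1) end.

Lemma rl_mono P i j : i <= j -> rl P i <= rl P j.
Proof. induction 1; simpl; lia. Qed.

Lemma rl_step P i : rl P (S i) <= S (rl P i).
Proof. simpl. destruct sign_eqb; lia. Qed.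

Lemma rl_alt P i : i < length P -> nth i P Pos = alt (nth 0 P Pos) (rl P i).
Proof.
  induction i; intros Hi; [reflexivity|]. simpl.
  destruct (sign_eqb (nth (S i) P Pos) (nth i P Pos)) eqn:E.
  - apply sign_eqb_spec in E. rewrite E, Nat.add_0_r. apply IHi; lia.
  - assert (nth (S i) P Pos <> nth i P Pos) by (intro h; apply sign_eqb_spec in h; congruence).
    rewrite Nat.add_1_r, alt_S, <- IHi by lia. apply sign_two. auto.
Qed.

Lemma rl_ivt P i c : c <= rl P i -> exists j, j <= i /\ rl P j = c.
Proof.
  induction i; intros Hc.
  - exists 0. simpl in *. split; lia.
  - destruct (le_lt_dec c (rl P i)) as [h|h].
    + destruct (IHi h) as [j [? ?]]. exists j. split; auto.
    + exists (S i). split; auto. pose proof (rl_step P i). lia.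
Qed.


Lemma red_iff (n : nat) (s2 s1 : list sign) (b : nat -> bool) :
  sign_string s1 ->
  (reduced_string_of s1 (map (fun k => nth k s2 Pos) (filter b (seq 0 n))) <->
   Adm' n s2 s1 (fun k => b k = true)).
Proof.
  intros Hs1.
  set (F := filter b (seq 0 n)).
  set (g := fun k => nth k s2 Pos).
  set (P := map g F).
  assert (HlP : length P = length F) by (apply length_map).
  assert (HnP : forall i, i < length F -> nth i P Pos = g (nth i F 0)) by (intros; apply nth_map_nat; auto).
  assert (HinF : forall k, In k F <-> k < n /\ b k = true) by (intros; unfold F; rewrite filt_in; split; intros [H1 H2]; split; auto; lia).
  assert (Hsort : forall i j, i < j < length F -> nth i F 0 < nth j F 0) by (apply filt_sorted).
  assert (Hmon : forall i j, i <= j < length F -> nth i F 0 <= nth j F 0) by (apply filt_mono).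
  assert (Hnth : forall i, i < length F -> In (nth i F 0) F) by (intros; apply nth_In; auto).
  assert (Hm2 : 2 <= length s1) by (apply Hs1).
  assert (Halt1 := sign_string_alt s1 Hs1).
  assert (Hidx : exists idx : nat -> nat, forall k, In k F -> idx k < length F /\ nth (idx k) F 0 = k).
  { apply (choice_nat (fun k i => In k F -> i < length F /\ nth i F 0 = k)).
    intros k. destruct (in_dec Nat.eq_dec k F) as [h|h].
    - destruct (In_nth F k 0 h) as [i [? ?]]. exists i; auto.
    - exists 0. tauto. }
  destruct Hidx as [idx Hidx].
  assert (Hord : forall i j, i < length F -> j < length F -> nth i F 0 <= nth j F 0 -> i <= j).
  { intros i j Hi Hj H. destruct (le_lt_dec i j); auto. assert (j < i < length F) by lia. apply Hsort in H0. lia. }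
  split.
  - intros [Hext [_ [[f [Hf1 [Hf2 Hf3]]] Hmax]]].
    set (m := length s1) in *.
    set (h := nth 0 P Pos).
    set (R0 := rl P (length P - 1)).
    assert (HpF : 2 <= length F) by (unfold ext_string in Hext; lia).
    set (gg := fun i => rl P (f i)).
    assert (Hstr : forall i, S i < m -> gg i < gg (S i)).
    { intros i Hi. unfold gg.
      assert (f i < f (S i)) by (apply Hf1; lia).
      pose proof (rl_mono P (f i) (f (S i)) ltac:(lia)).
      destruct (Nat.eq_dec (rl P (f i)) (rl P (f (S i)))) as [E|E]; [|lia].
      exfalso. pose proof (Hf3 i ltac:(lia)) as H1. pose proof (Hf3 (S i) ltac:(lia)) as H2.
      rewrite (proj2 Hs1 i) in H2 by lia.
      rewrite (rl_alt P (f i)) in H1 by (apply Hf2; lia). rewrite (rl_alt P (f (S i))) in H2 by (apply Hf2; lia).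
      rewrite <- E in H2. rewrite <- H1 in H2. apply (opp_neq (nth i s1 Pos)). auto. }
    assert (Hgap : forall i j, i <= j < m -> gg i + (j - i) <= gg j).
    { intros i j [Hij Hjm]. induction Hij; [lia|]. pose proof (Hstr m0 Hjm). specialize (IHHij ltac:(lia)). lia. }
    assert (HgR : gg (m - 1) <= R0).
    { unfold gg, R0. apply rl_mono. pose proof (Hf2 (m-1) ltac:(lia)). lia. }
    assert (HR1 : m - 1 <= R0) by (pose proof (Hgap 0 (m-1) ltac:(lia)); lia).
    (* maximality: build an alternating substring of length R0+1 *)
    assert (HRm : R0 + 1 <= m).
    { assert (He : exists e : nat -> nat, forall c, c <= R0 -> e c <= length P - 1 /\ rl P (e c) = c).
      { apply (choice_nat (fun c j => c <= R0 -> j <= length P - 1 /\ rl P j = c)).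
        intros c. destruct (le_lt_dec c R0) as [h0|h0].
        - destruct (rl_ivt P (length P - 1) c h0) as [j [? ?]]. exists j. auto.
        - exists 0. lia. }
      destruct He as [e He].
      set (u := map (alt h) (seq 0 (R0 + 1))).
      assert (Hlu : length u = R0 + 1) by (unfold u; rewrite length_map, length_seq; auto).
      assert (Hnu : forall c, c < R0 + 1 -> nth c u Pos = alt h c).
      { intros c Hc. unfold u. rewrite (nth_indep _ Pos (alt h 0)) by (rewrite length_map, length_seq; auto).
        rewrite map_nth, seq_nth by auto. reflexivity. }
      rewrite <- Hlu. apply Hmax.
      - split; [unfold ext_string; lia|]. intros j Hj. rewrite !Hnu by lia. apply alt_S.
      - exists e. repeat split.
        + intros i j Hij. destruct (le_lt_dec (e j) (e i)) as [h1|h1]; auto.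
          pose proof (rl_mono P _ _ h1). rewrite (proj2 (He j ltac:(lia))), (proj2 (He i ltac:(lia))) in H. lia.
        + intros i Hi. pose proof (He i ltac:(lia)). lia.
        + intros i Hi. rewrite Hnu by lia. rewrite rl_alt by (pose proof (He i ltac:(lia)); lia).
          rewrite (proj2 (He i ltac:(lia))). reflexivity. }
    assert (HR : R0 = m - 1) by lia.
    assert (Hgi : forall i, i < m -> gg i = i).
    { intros i Hi. pose proof (Hgap 0 i ltac:(lia)). pose proof (Hgap i (m-1) ltac:(lia)). lia. }
    assert (Hh : nth 0 s1 Pos = h).
    { rewrite (Hf3 0) by lia. rewrite (rl_alt P (f 0)) by (apply Hf2; lia). fold h. change (rl P (f 0)) with (gg 0). rewrite Hgi by lia. reflexivity. }
    exists (fun k => rl P (idx k)). split; [|split].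
    + intros k Hk Hb. destruct (Hidx k (proj2 (HinF k) (conj Hk Hb))) as [Hi1 Hi2].
      pose proof (rl_mono P (idx k) (length P - 1) ltac:(lia)) as HH. fold R0 in HH. split; [lia|].
      rewrite Halt1 by lia. rewrite Hh.
      change (nth k s2 Pos) with (g k). rewrite <- Hi2 at 1. rewrite <- HnP by auto. apply rl_alt. lia.
    + intros k k' Hkk Hk' Hb Hb'.
      assert (Hkn : k < n) by lia.
      destruct (Hidx k (proj2 (HinF k) (conj Hkn Hb))) as [Hi1 Hi2].
      destruct (Hidx k' (proj2 (HinF k') (conj Hk' Hb'))) as [Hi1' Hi2'].
      apply rl_mono. apply Hord; auto. lia.
    + intros l Hl. pose proof (Hf2 l Hl) as Hfl. rewrite HlP in Hfl.
      pose proof (Hnth _ Hfl) as Hn1. pose proof Hn1 as Hn2. apply HinF in Hn2.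
      exists (nth (f l) F 0). split; [tauto|]. split; [tauto|].
      destruct (Hidx _ Hn1) as [Hi1 Hi2].
      assert (HH: idx (nth (f l) F 0) = f l) by (apply (filt_inj b n 0); auto).
      rewrite HH. apply Hgi. auto.
  - intros [C [HC1 [HC2 HC3]]].
    set (m := length s1) in *.
    assert (Hw : exists w : nat -> nat, forall l, l < m -> w l < n /\ b (w l) = true /\ C (w l) = l).
    { apply (choice_nat (fun l k => l < m -> k < n /\ b k = true /\ C k = l)).
      intros l. destruct (le_lt_dec m l) as [h|h].
      - exists 0; lia.
      - destruct (HC3 l h) as [k ?]. exists k. auto. }
    destruct Hw as [w Hw].
    assert (HwF : forall l, l < m -> In (w l) F) by (intros l Hl; apply HinF; pose proof (Hw l Hl); tauto).
    split; [|split; [auto|split]].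
    + unfold ext_string. rewrite HlP. apply (two_in F (w 0) (w 1)); try apply HwF; try lia.
      intro E. pose proof (Hw 0 ltac:(lia)). pose proof (Hw 1 ltac:(lia)). rewrite E in H. lia.
    + exists (fun l => idx (w l)). repeat split.
      * intros i j Hij.
        assert (w i < w j).
        { destruct (le_lt_dec (w j) (w i)) as [h|h]; auto.
          pose proof (Hw i ltac:(lia)). pose proof (Hw j ltac:(lia)).
          pose proof (HC2 (w j) (w i) h ltac:(tauto) ltac:(tauto) ltac:(tauto)). lia. }
        destruct (Hidx _ (HwF i ltac:(lia))) as [? E1]. destruct (Hidx _ (HwF j ltac:(lia))) as [? E2].
        destruct (le_lt_dec (idx (w j)) (idx (w i))) as [h|h]; auto.
        pose proof (Hmon _ _ (conj h H0)). lia.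
      * intros i Hi. rewrite HlP. apply Hidx, HwF; auto.
      * intros i Hi. destruct (Hidx _ (HwF i Hi)) as [? E1]. rewrite HnP by auto. rewrite E1.
        pose proof (Hw i Hi). unfold g. rewrite (proj2 (HC1 (w i) ltac:(tauto) ltac:(tauto))).
        destruct H0 as [_ [_ ->]]. reflexivity.
    + intros u [Hu2 Hualt] [e [He1 [He2 He3]]].
      set (gg := fun i => C (nth (e i) F 0)).
      assert (Hin : forall i, i < length u -> In (nth (e i) F 0) F) by (intros; apply Hnth; rewrite <- HlP; auto).
      assert (Hsg : forall i, i < length u -> nth i u Pos = nth (gg i) s1 Pos /\ gg i < m).
      { intros i Hi. rewrite He3 by auto. rewrite HnP by (rewrite <- HlP; auto).
        pose proof (Hin i Hi) as Hi'. apply HinF in Hi'. unfold g, gg. pose proof (HC1 _ (proj1 Hi') (proj2 Hi')). split; [tauto|tauto]. }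
      assert (Hst : forall i, S i < length u -> gg i < gg (S i)).
      { intros i Hi. assert (e i < e (S i)) by (apply He1; lia).
        assert (nth (e i) F 0 < nth (e (S i)) F 0) by (apply Hsort; pose proof (He2 (S i) Hi); lia).
        pose proof (Hin i ltac:(lia)) as I1. pose proof (Hin (S i) Hi) as I2. apply HinF in I1, I2.
        pose proof (HC2 (nth (e i) F 0) (nth (e (S i)) F 0) ltac:(lia) ltac:(tauto) ltac:(tauto) ltac:(tauto)) as H1. fold gg in H1.
        destruct (Nat.eq_dec (gg i) (gg (S i))) as [E|E]; [|unfold gg in *; lia].
        exfalso. pose proof (Hualt i Hi) as H2. rewrite (proj1 (Hsg i ltac:(lia))), (proj1 (Hsg (S i) Hi)) in H2.
        rewrite E in H2. apply (opp_neq (nth (gg (S i)) s1 Pos)). auto. }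
      assert (Hge : forall i, i < length u -> i <= gg i).
      { induction i; intros Hi; [lia|]. pose proof (Hst i Hi). specialize (IHi ltac:(lia)). lia. }
      unfold ext_string in Hu2. pose proof (Hge (length u - 1) ltac:(lia)). pose proof (Hsg (length u - 1) ltac:(lia)). lia.
Qed.

Fixpoint srch (s2 : list sign) (s : sign) (a fuel : nat) : nat :=
  match fuel with
  | O => a
  | S f => if sign_eqb (nth a s2 Pos) s then a else srch s2 s (S a) f
  end.

Lemma srch_spec s2 s fuel : forall a k, a <= k -> k < a + fuel -> nth k s2 Pos = s ->
  a <= srch s2 s a fuel <= k /\ nth (srch s2 s a fuel) s2 Pos = s /\
  (forall k', a <= k' < srch s2 s a fuel -> nth k' s2 Pos <> s).
Proof.
  induction fuel; intros a k H1 H2 H3; simpl; [lia|].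
  destruct (sign_eqb (nth a s2 Pos) s) eqn:E.
  - apply sign_eqb_spec in E. split; [lia|]. split; auto. intros; lia.
  - assert (Ha : nth a s2 Pos <> s) by (intro h; apply sign_eqb_spec in h; congruence).
    assert (a <> k) by (intro; subst; auto).
    destruct (IHfuel (S a) k ltac:(lia) ltac:(lia) H3) as [G1 [G2 G3]].
    split; [lia|]. split; auto. intros k' Hk'. destruct (Nat.eq_dec k' a); [subst; auto|]. apply G3; lia.
Qed.

Fixpoint qq (s2 s1 : list sign) (n i : nat) : nat :=
  match i with
  | O => srch s2 (nth 0 s1 Pos) 0 n
  | S i' => srch s2 (nth (S i') s1 Pos) (S (qq s2 s1 n i')) n
  end.

Definition lo (s2 s1 : list sign) (n i : nat) : nat :=
  match i with O => O | S i' => S (qq s2 s1 n i') end.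

Definition Qgood (n : nat) (s2 s1 : list sign) (q lo : nat -> nat) : Prop :=
  (forall i, i < length s1 -> q i < n /\ lo i <= q i /\ nth (q i) s2 Pos = nth i s1 Pos /\
     (forall k, lo i <= k < q i -> nth k s2 Pos <> nth i s1 Pos)) /\
  lo 0 = 0 /\ (forall i, lo (S i) = S (q i)).

Lemma qgood_exists n s2 s1 : length s2 = n -> substring s1 s2 -> Qgood n s2 s1 (qq s2 s1 n) (lo s2 s1 n).
Proof.
  intros Hn [f [Hf1 [Hf2 Hf3]]].
  assert (H : forall i, i < length s1 -> lo s2 s1 n i <= qq s2 s1 n i <= f i /\
     nth (qq s2 s1 n i) s2 Pos = nth i s1 Pos /\
     (forall k, lo s2 s1 n i <= k < qq s2 s1 n i -> nth k s2 Pos <> nth i s1 Pos)).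
  { induction i; intros Hi.
    - simpl. apply (srch_spec s2 (nth 0 s1 Pos) n 0 (f 0)); [lia| pose proof (Hf2 0 Hi); lia | symmetry; apply Hf3; auto].
    - destruct (IHi ltac:(lia)) as [[? ?] _].
      assert (f i < f (S i)) by (apply Hf1; lia).
      simpl. apply (srch_spec s2 (nth (S i) s1 Pos) n _ (f (S i))); [lia| pose proof (Hf2 (S i) Hi); lia | symmetry; apply Hf3; auto]. }
  split; [|split; [reflexivity| intros; reflexivity]].
  intros i Hi. destruct (H i Hi) as [[? ?] [? ?]]. pose proof (Hf2 i Hi). repeat split; auto; lia.
Qed.

Lemma qgood_mono n s2 s1 q lo : Qgood n s2 s1 q lo -> forall i i', i < i' < length s1 -> q i < q i'.
Proof.
  intros [HQ [_ Hlo]] i i' [Hii' Hi']. induction Hii'.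
  - pose proof (HQ (S i) Hi'). rewrite Hlo in H. lia.
  - pose proof (HQ (S m) Hi'). rewrite Hlo in H. specialize (IHHii' ltac:(lia)). lia.
Qed.

Definition LabOK (n : nat) (s2 s1 : list sign) (Z : nat -> Prop) (C : nat -> nat) : Prop :=
    (forall k, k < n -> Z k -> C k < length s1 /\ nth k s2 Pos = nth (C k) s1 Pos) /\
    (forall k k', k <= k' -> k' < n -> Z k -> Z k' -> C k <= C k') /\
    (forall l, l < length s1 -> exists k, k < n /\ Z k /\ C k = l).

Lemma lab_q n s2 s1 q lo Z C : Qgood n s2 s1 q lo -> sign_string s1 -> LabOK n s2 s1 Z C ->
  forall i, i < length s1 -> (forall i', i' <= i -> Z (q i')) -> C (q i) = i.
Proof.
  intros HQ Hs1 [HC1 [HC2 HC3]].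
  pose proof HQ as [HQ1 [Hlo0 HloS]].
  induction i; intros Hi HZ.
  - destruct (HC3 0 Hi) as [w [Hw1 [Hw2 Hw3]]].
    destruct (HQ1 0 Hi) as [Hq1 [_ [Hq3 Hq4]]].
    destruct (le_lt_dec (q 0) w) as [h|h].
    + pose proof (HC2 _ _ h Hw1 (HZ 0 ltac:(lia)) Hw2). lia.
    + exfalso. apply (Hq4 w). lia. rewrite (proj2 (HC1 w Hw1 Hw2)), Hw3. reflexivity.
  - specialize (IHi ltac:(lia) ltac:(intros; apply HZ; lia)).
    destruct (HQ1 (S i) Hi) as [Hq1 [Hq2 [Hq3 Hq4]]]. rewrite HloS in Hq2, Hq4.
    destruct (HC3 (S i) Hi) as [w [Hw1 [Hw2 Hw3]]].
    assert (Hup : C (q (S i)) <= S i).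
    { destruct (le_lt_dec (q (S i)) w) as [h|h].
      - pose proof (HC2 _ _ h Hw1 (HZ (S i) ltac:(lia)) Hw2). lia.
      - exfalso. destruct (le_lt_dec w (q i)) as [h2|h2].
        + pose proof (HC2 _ _ h2 ltac:(lia) Hw2 (HZ i ltac:(lia))). lia.
        + apply (Hq4 w). lia. rewrite (proj2 (HC1 w Hw1 Hw2)), Hw3. reflexivity. }
    pose proof (HC2 (q i) (q (S i)) ltac:(lia) Hq1 (HZ i ltac:(lia)) (HZ (S i) ltac:(lia))).
    destruct (Nat.eq_dec (C (q (S i))) i) as [E|E]; [|lia].
    exfalso. pose proof (proj2 (HC1 _ Hq1 (HZ (S i) ltac:(lia)))) as H2. rewrite E, Hq3 in H2.
    rewrite (proj2 Hs1 i Hi) in H2. apply (opp_neq (nth i s1 Pos)). auto.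
Qed.

Definition Rem (n : nat) (s2 s1 : list sign) (lo : nat -> nat) (Z : nat -> Prop) (j k : nat) : Prop :=
  lo j <= k /\ k < n /\ nth k s2 Pos <> nth j s1 Pos /\
  ~ (exists i, lo j <= i < k /\ nth i s2 Pos = nth j s1 Pos /\ Z i).

Lemma step1 n s2 s1 q lo Z C j : Qgood n s2 s1 q lo -> sign_string s1 -> LabOK n s2 s1 Z C ->
  j < length s1 -> (forall i, i < j -> Z (q i)) ->
  LabOK n s2 s1 (fun k => Z k /\ ~ Rem n s2 s1 lo Z j k) C.
Proof.
  intros HQ Hs1 HL Hj HZq.
  pose proof HL as [HC1 [HC2 HC3]].
  pose proof HQ as [HQ1 [Hlo0 HloS]].
  assert (Hprev : forall j', j = S j' -> C (q j') = j').
  { intros j' ->. apply (lab_q n s2 s1 q lo Z C HQ Hs1 HL); [lia|]. intros; apply HZq; lia. }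
  split; [|split].
  - intros k Hk [HZ _]. auto.
  - intros k k' ? ? [? _] [? _]. auto.
  - intros l Hl. destruct (lt_dec l j) as [h|h].
    + exists (q l). destruct (HQ1 l Hl) as [Hq1 _]. split; auto. split; [split; [apply HZq; auto|]|].
      * intros [HR _]. destruct j as [|j']; [lia|]. rewrite HloS in HR.
        destruct (Nat.eq_dec l j'); [subst; lia|].
        pose proof (qgood_mono n s2 s1 q lo HQ l j' ltac:(lia)). lia.
      * apply (lab_q n s2 s1 q lo Z C HQ Hs1 HL); auto. intros; apply HZq; lia.
    + destruct (HC3 l Hl) as [w [Hw1 [Hw2 Hw3]]]. exists w. split; auto. split; auto. split; auto.
      intros [HR1 [_ [HR3 HR4]]]. apply HR4.
      assert (Hl' : l <> j) by (intro; subst; apply HR3; rewrite (proj2 (HC1 w Hw1 Hw2)); reflexivity).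
      destruct (HC3 j Hj) as [wj [Hj1 [Hj2 Hj3]]]. exists wj. split; [split|split; auto].
      * destruct j as [|j']; [rewrite Hlo0; lia|]. rewrite HloS.
        destruct (le_lt_dec wj (q j')) as [h2|h2]; [|lia].
        pose proof (HC2 _ _ h2 ltac:(destruct (HQ1 j' ltac:(lia)); lia) Hj2 (HZq j' ltac:(lia))).
        rewrite (Hprev j' eq_refl) in H. lia.
      * destruct (le_lt_dec w wj) as [h2|h2]; auto.
        pose proof (HC2 _ _ h2 Hj1 Hw2 Hj2). lia.
      * rewrite (proj2 (HC1 wj Hj1 Hj2)), Hj3. reflexivity.
Qed.

Lemma notRem n s2 s1 lo Z j k : lo j <= k -> k < n -> nth k s2 Pos <> nth j s1 Pos ->
  ~ Rem n s2 s1 lo Z j k -> exists i, lo j <= i < k /\ nth i s2 Pos = nth j s1 Pos /\ Z i.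
Proof. intros H1 H2 H3 H4. apply NNPP. intro H5. apply H4. repeat split; auto. Qed.

Lemma step2 n s2 s1 q lo Z C j : Qgood n s2 s1 q lo -> sign_string s1 -> LabOK n s2 s1 Z C ->
  j < length s1 -> (forall i, i < j -> Z (q i)) ->
  Adm' n s2 s1 (fun k => k = q j \/ (Z k /\ ~ Rem n s2 s1 lo Z j k)).
Proof.
  intros HQ Hs1 HL Hj HZq.
  pose proof HL as [HC1 [HC2 HC3]].
  pose proof HQ as [HQ1 [Hlo0 HloS]].
  pose proof (step1 n s2 s1 q lo Z C j HQ Hs1 HL Hj HZq) as [HD1 [HD2 HD3]].
  assert (Hprev : forall j', j = S j' -> C (q j') = j').
  { intros j' ->. apply (lab_q n s2 s1 q lo Z C HQ Hs1 HL); [lia|]. intros; apply HZq; lia. }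
  assert (Hqj : Z (q j) -> C (q j) = j).
  { intros Hz. apply (lab_q n s2 s1 q lo Z C HQ Hs1 HL); auto. intros i' Hi'.
    destruct (Nat.eq_dec i' j); [subst; auto|]. apply HZq; lia. }
  destruct (HQ1 j Hj) as [Hq1 [Hq2 [Hq3 Hq4]]].
  exists (fun k => if Nat.eq_dec k (q j) then j else C k). split; [|split].
  - intros k Hk HZk. destruct (Nat.eq_dec k (q j)) as [E|E].
    + subst k. split; auto.
    + destruct HZk as [|Hz]; [congruence|]. apply HD1; auto.
  - intros k k' Hkk Hk' Z1 Z2.
    destruct (Nat.eq_dec k (q j)) as [E1|E1]; destruct (Nat.eq_dec k' (q j)) as [E2|E2]; auto.
    + destruct Z2 as [|[Zk' NR]]; [congruence|].
      destruct j as [|j']; [lia|].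
      pose proof (Hprev j' eq_refl) as Hp. destruct (HQ1 j' ltac:(lia)) as [Hp1 _].
      pose proof (qgood_mono n s2 s1 q lo HQ j' (S j') ltac:(lia)).
      pose proof (HC2 (q j') k' ltac:(lia) Hk' (HZq j' ltac:(lia)) Zk').
      destruct (Nat.eq_dec (C k') j') as [E|E]; [|lia].
      exfalso. pose proof (proj2 (HC1 k' Hk' Zk')) as Hs. rewrite E in Hs.
      destruct (notRem n s2 s1 lo Z (S j') k') as [i [Hi1 [Hi2 Hi3]]]; auto.
      * rewrite HloS. lia.
      * rewrite Hs, (proj2 Hs1 j' Hj). apply not_eq_sym, opp_neq.
      * rewrite HloS in Hi1. pose proof (HC2 (q j') i ltac:(lia) ltac:(lia) (HZq j' ltac:(lia)) Hi3).
        pose proof (HC2 i k' ltac:(lia) Hk' Hi3 Zk').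
        assert (HCi : C i = j') by lia. pose proof (proj2 (HC1 i ltac:(lia) Hi3)) as Hs'.
        rewrite HCi, Hi2, (proj2 Hs1 j' Hj) in Hs'. eapply opp_neq. exact Hs'.
    + destruct Z1 as [|[Zk NR]]; [congruence|]. subst k'.
      destruct (le_lt_dec (lo j) k) as [h|h].
      * exfalso. assert (Hne : nth k s2 Pos <> nth j s1 Pos) by (apply Hq4; lia).
        destruct (notRem n s2 s1 lo Z j k) as [i [Hi1 [Hi2 Hi3]]]; auto; try lia.
        apply (Hq4 i); auto. lia.
      * destruct j as [|j']; [rewrite Hlo0 in h; lia|]. rewrite HloS in h.
        pose proof (HC2 k (q j') ltac:(lia) ltac:(destruct (HQ1 j' ltac:(lia)); lia) Zk (HZq j' ltac:(lia))).
        rewrite (Hprev j' eq_refl) in H. lia.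
    + destruct Z1 as [|Z1]; [congruence|]. destruct Z2 as [|Z2]; [congruence|]. apply HD2; auto.
  - intros l Hl. destruct (Nat.eq_dec l j) as [->|Hne].
    + exists (q j). split; auto. split; auto. destruct (Nat.eq_dec _ _); congruence.
    + destruct (HD3 l Hl) as [w [Hw1 [Hw2 Hw3]]]. exists w. split; auto. split; auto.
      destruct (Nat.eq_dec w (q j)) as [E|E]; auto.
      subst w. exfalso. rewrite (Hqj (proj1 Hw2)) in Hw3. auto.
Qed.

Lemma stepQ n s2 s1 q lo Z C : Qgood n s2 s1 q lo -> sign_string s1 -> LabOK n s2 s1 Z C ->
  (forall i, i < length s1 -> Z (q i)) ->
  Adm' n s2 s1 (fun k => exists i, i < length s1 /\ q i = k).
Proof.
  intros HQ Hs1 HL HZq. pose proof HL as [HC1 [HC2 HC3]]. pose proof HQ as [HQ1 _].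
  exists C. split; [|split].
  - intros k Hk [i [Hi <-]]. apply HC1; auto.
  - intros k k' ? ? [i [Hi <-]] [i' [Hi' <-]]. apply HC2; auto.
  - intros l Hl. exists (q l). split; [apply HQ1; auto|]. split; [exists l; auto|].
    apply (lab_q n s2 s1 q lo Z C HQ Hs1 HL); auto. intros; apply HZq; lia.
Qed.

Lemma filter_len_mono (p p' : nat -> bool) l : (forall i, p i = true -> p' i = true) ->
  length (filter p l) <= length (filter p' l).
Proof.
  intros H. induction l; simpl; auto.
  destruct (p a) eqn:E; [rewrite (H a E); simpl; lia|]. destruct (p' a); simpl; lia.
Qed.

Lemma admQ n s2 s1 q lo : Qgood n s2 s1 q lo -> Adm' n s2 s1 (fun k => exists i, i < length s1 /\ q i = k).
Proof.
  intros HQ. pose proof HQ as [HQ1 _]. set (m := length s1) in *.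
  set (C := fun k => length (filter (fun i => q i <? k) (seq 0 m))).
  assert (Hcnt : forall l, l < m -> forall m', m' <= m -> length (filter (fun i => q i <? q l) (seq 0 m')) = Nat.min m' l).
  { intros l Hl. induction m'; intros Hm'; [reflexivity|].
    rewrite seq_S, filter_app, length_app, IHm' by lia. cbn [filter]. rewrite Nat.add_0_l.
    destruct (Nat.ltb_spec (q m') (q l)) as [h|h]; cbn [length].
    - destruct (le_lt_dec l m') as [h2|h2].
      + destruct (Nat.eq_dec l m'); [subst; lia|].
        pose proof (qgood_mono n s2 s1 q lo HQ l m' ltac:(lia)). lia.
      + lia.
    - destruct (le_lt_dec l m') as [h2|h2]; [lia|].
      pose proof (qgood_mono n s2 s1 q lo HQ m' l ltac:(lia)). lia. }
  assert (HC : forall l, l < m -> C (q l) = l) by (intros; unfold C; rewrite Hcnt; lia).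
  exists C. split; [|split].
  - intros k Hk [i [Hi <-]]. rewrite HC by auto. split; auto. apply HQ1; auto.
  - intros k k' Hkk _ _ _. unfold C. apply filter_len_mono. intros i h.
    apply Nat.ltb_lt in h. apply Nat.ltb_lt. lia.
  - intros l Hl. exists (q l). split; [apply HQ1; auto|]. split; [exists l; auto|]. auto.
Qed.

Open Scope R_scope.

Definition dist_le (n : nat) (x y : nat -> R) (d : R) : Prop :=
  forall k, (k < n)%nat -> Rabs (x k - y k) <= d.

Definition seg (t : R) (x y : nat -> R) : nat -> R := fun k => x k + t * (y k - x k).

Definition ContrOn (n : nat) (L A : (nat -> R) -> Prop) (x0 : nat -> R) : Prop :=
  exists (H : R -> (nat -> R) -> (nat -> R)) (C : R), 0 <= C /\
    (forall t x, 0 <= t <= 1 -> A x -> L (H t x)) /\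
    (forall x, A x -> forall k, H 0 x k = x k) /\
    (forall x, A x -> forall k, H 1 x k = x0 k) /\
    (forall t s x y d, 0 <= t <= 1 -> 0 <= s <= 1 -> A x -> A y -> 0 <= d ->
        dist_le n x y d -> dist_le n (H t x) (H s y) (C * (Rabs (t - s) + d))).

Lemma abs3 a u b v c w : Rabs (a * u + b * v + c * w) <= Rabs a * Rabs u + Rabs b * Rabs v + Rabs c * Rabs w.
Proof.
  eapply Rle_trans; [apply Rabs_triang|]. rewrite !Rabs_mult.
  pose proof (Rabs_triang (a * u) (b * v)). rewrite !Rabs_mult in H. lra.
Qed.

Lemma seg_lip n (A : (nat -> R) -> Prop) (G : (nat -> R) -> (nat -> R)) K B a b x y d :
  0 <= K -> 0 <= a <= 1 -> 0 <= b <= 1 -> 0 <= d ->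
  dist_le n x y d -> dist_le n (G x) (G y) (K * d) -> dist_le n (G x) x B ->
  dist_le n (seg a x (G x)) (seg b y (G y)) ((1 + K) * d + Rabs (a - b) * B).
Proof.
  intros HK Ha Hb Hd H1 H2 H3 k Hk. unfold seg.
  replace (x k + a * (G x k - x k) - (y k + b * (G y k - y k))) with
    ((1 - b) * (x k - y k) + b * (G x k - G y k) + (a - b) * (G x k - x k)) by ring.
  eapply Rle_trans; [apply abs3|].
  specialize (H1 k Hk). specialize (H2 k Hk). specialize (H3 k Hk).
  rewrite (Rabs_right (1 - b)) by lra. rewrite (Rabs_right b) by lra.
  pose proof (Rabs_pos (a - b)).
  assert ((1 - b) * Rabs (x k - y k) <= (1 - b) * d) by (apply Rmult_le_compat_l; lra).
  assert (b * Rabs (G x k - G y k) <= b * (K * d)) by (apply Rmult_le_compat_l; lra).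
  assert (Rabs (a - b) * Rabs (G x k - x k) <= Rabs (a - b) * B) by (apply Rmult_le_compat_l; lra).
  assert (0 <= K * d) by (apply Rmult_le_pos; lra).
  assert (b * (K * d) <= K * d) by nra.
  nra.
Qed.

Lemma fin_ineq K B C2 u d : 0 <= K -> 0 <= B -> 0 <= C2 -> 0 <= u -> 0 <= d ->
  (1 + K) * d + 2 * u * B + 2 * u * C2 + C2 * K * d <= (2 * B + 1 + K + 2 * C2 + C2 * K) * (u + d).
Proof.
  intros. assert (0 <= B * d) by nra. assert (0 <= C2 * d) by nra. assert (0 <= K * u) by nra.
  assert (0 <= C2 * K * u) by (apply Rmult_le_pos; nra). nra.
Qed.

Lemma contr_concat n (L A A' : (nat -> R) -> Prop) x0 (G : (nat -> R) -> (nat -> R)) K B :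
  ContrOn n L A' x0 -> 0 <= K -> 0 <= B ->
  (forall x, A x -> A' (G x)) ->
  (forall t x, 0 <= t <= 1 -> A x -> L (seg t x (G x))) ->
  (forall x y d, A x -> A y -> 0 <= d -> dist_le n x y d -> dist_le n (G x) (G y) (K * d)) ->
  (forall x, A x -> dist_le n (G x) x B) ->
  ContrOn n L A x0.
Proof.
  intros [H2 [C2 [HC2 [Hin2 [H20 [H21 Hlip2]]]]]] HK HB HGA Hseg HGl HGb.
  exists (fun t x => if Rle_dec t (1/2) then seg (2 * t) x (G x) else H2 (2 * t - 1) (G x)).
  exists (2 * B + 1 + K + 2 * C2 + C2 * K). split; [nra|].
  split; [|split; [|split]].
  - intros t x Ht Ax. destruct (Rle_dec t (1/2)).
    + apply Hseg; auto; lra.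
    + apply Hin2; auto; lra.
  - intros x Ax k. destruct (Rle_dec 0 (1/2)); [|lra]. unfold seg. ring.
  - intros x Ax k. destruct (Rle_dec 1 (1/2)); [lra|]. replace (2 * 1 - 1) with 1 by ring. apply H21; auto.
  - intros t s x y d Ht Hs Ax Ay Hd Hxy k Hk.
    assert (Hgxy := HGl x y d Ax Ay Hd Hxy).
    assert (Hgx := HGb x Ax). assert (Hgy := HGb y Ay).
    assert (HKd : 0 <= K * d) by (apply Rmult_le_pos; lra).
    assert (Hseg1 : forall a b, 0 <= a <= 1 -> 0 <= b <= 1 ->
      Rabs (seg a x (G x) k - seg b y (G y) k) <= (1 + K) * d + Rabs (a - b) * B).
    { intros a b Ha Hb'. apply (seg_lip n A G K B a b x y d); auto. }
    pose proof (Rabs_pos (t - s)).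
    destruct (Rle_dec t (1/2)) as [h1|h1]; destruct (Rle_dec s (1/2)) as [h2|h2].
    + specialize (Hseg1 (2 * t) (2 * s) ltac:(lra) ltac:(lra)).
      replace (2 * t - 2 * s) with (2 * (t - s)) in Hseg1 by ring. rewrite Rabs_mult, (Rabs_right 2) in Hseg1 by lra.
      eapply Rle_trans; [|apply fin_ineq; auto]. assert (0 <= 2 * Rabs (t - s) * C2) by nra.
      assert (0 <= C2 * K * d) by (apply Rmult_le_pos; nra). lra.
    + specialize (Hseg1 (2 * t) 1 ltac:(lra) ltac:(lra)).
      assert (E : seg 1 y (G y) k = H2 0 (G y) k) by (rewrite H20 by auto; unfold seg; ring).
      pose proof (Hlip2 0 (2 * s - 1) (G y) (G y) 0 ltac:(lra) ltac:(lra) (HGA y Ay) (HGA y Ay) ltac:(lra)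
        ltac:(intros k' _; unfold Rminus; rewrite Rplus_opp_r, Rabs_R0; lra) k Hk) as Hl.
      rewrite Rplus_0_r in Hl. rewrite E in Hseg1.
      replace (Rabs (0 - (2 * s - 1))) with (2 * s - 1) in Hl by (rewrite Rabs_left1 by lra; ring).
      replace (Rabs (2 * t - 1)) with (1 - 2 * t) in Hseg1 by (rewrite Rabs_left1 by lra; ring).
      assert (Hts : s - t <= Rabs (t - s)) by (rewrite Rabs_minus_sym; apply Rle_abs).
      pose proof (Rabs_triang (seg (2 * t) x (G x) k - H2 0 (G y) k) (H2 0 (G y) k - H2 (2 * s - 1) (G y) k)).
      replace (seg (2 * t) x (G x) k - H2 0 (G y) k + (H2 0 (G y) k - H2 (2 * s - 1) (G y) k))
        with (seg (2 * t) x (G x) k - H2 (2 * s - 1) (G y) k) in H0 by ring.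
      eapply Rle_trans; [|apply fin_ineq; auto].
      assert ((1 - 2 * t) * B <= 2 * Rabs (t - s) * B) by (apply Rmult_le_compat_r; lra).
      assert (C2 * (2 * s - 1) <= 2 * Rabs (t - s) * C2) by nra.
      assert (0 <= C2 * K * d) by (apply Rmult_le_pos; nra). lra.
    + specialize (Hseg1 1 (2 * s) ltac:(lra) ltac:(lra)).
      assert (E : seg 1 x (G x) k = H2 0 (G x) k) by (rewrite H20 by auto; unfold seg; ring).
      pose proof (Hlip2 (2 * t - 1) 0 (G x) (G x) 0 ltac:(lra) ltac:(lra) (HGA x Ax) (HGA x Ax) ltac:(lra)
        ltac:(intros k' _; unfold Rminus; rewrite Rplus_opp_r, Rabs_R0; lra) k Hk) as Hl.
      rewrite Rplus_0_r in Hl. rewrite E in Hseg1.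
      replace (Rabs (2 * t - 1 - 0)) with (2 * t - 1) in Hl by (rewrite Rabs_right by lra; ring).
      replace (Rabs (1 - 2 * s)) with (1 - 2 * s) in Hseg1 by (rewrite Rabs_right by lra; ring).
      assert (Hts : t - s <= Rabs (t - s)) by apply Rle_abs.
      pose proof (Rabs_triang (H2 (2 * t - 1) (G x) k - H2 0 (G x) k) (H2 0 (G x) k - seg (2 * s) y (G y) k)).
      replace (H2 (2 * t - 1) (G x) k - H2 0 (G x) k + (H2 0 (G x) k - seg (2 * s) y (G y) k))
        with (H2 (2 * t - 1) (G x) k - seg (2 * s) y (G y) k) in H0 by ring.
      eapply Rle_trans; [|apply fin_ineq; auto].
      assert ((1 - 2 * s) * B <= 2 * Rabs (t - s) * B) by (apply Rmult_le_compat_r; lra).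
      assert (C2 * (2 * t - 1) <= 2 * Rabs (t - s) * C2) by nra.
      assert (0 <= C2 * K * d) by (apply Rmult_le_pos; nra). lra.
    + pose proof (Hlip2 (2 * t - 1) (2 * s - 1) (G x) (G y) (K * d) ltac:(lra) ltac:(lra) (HGA x Ax) (HGA y Ay) HKd Hgxy k Hk) as Hl.
      replace (2 * t - 1 - (2 * s - 1)) with (2 * (t - s)) in Hl by ring.
      rewrite Rabs_mult, (Rabs_right 2) in Hl by lra.
      eapply Rle_trans; [|apply fin_ineq; auto]. assert (0 <= 2 * Rabs (t - s) * B) by nra. lra.
Qed.

Lemma contr_base n (L A : (nat -> R) -> Prop) x0 :
  (forall t x, 0 <= t <= 1 -> A x -> L (seg t x x0)) ->
  (forall x, A x -> dist_le n x0 x 2) ->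
  ContrOn n L A x0.
Proof.
  intros Hseg Hb.
  exists (fun t x => seg t x x0), 2. split; [lra|]. split; [|split; [|split]].
  - auto.
  - intros; unfold seg; ring.
  - intros; unfold seg; ring.
  - intros t s x y d Ht Hs Ax Ay Hd Hxy k Hk. unfold seg.
    replace (x k + t * (x0 k - x k) - (y k + s * (x0 k - y k))) with
      ((1 - t) * (x k - y k) + 0 * 0 + (t - s) * (x0 k - y k)) by ring.
    eapply Rle_trans; [apply abs3|].
    specialize (Hxy k Hk). specialize (Hb y Ay k Hk).
    rewrite (Rabs_right (1 - t)) by lra. rewrite Rabs_R0.
    pose proof (Rabs_pos (t - s)).
    assert ((1 - t) * Rabs (x k - y k) <= (1 - t) * d) by (apply Rmult_le_compat_l; lra).
    assert (Rabs (t - s) * Rabs (x0 k - y k) <= Rabs (t - s) * 2) by (apply Rmult_le_compat_l; lra).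
    nra.
Qed.

Lemma contr_final n (L : (nat -> R) -> Prop) x0 : ContrOn n L L x0 -> L x0 -> contractible n L.
Proof.
  intros [H [C [HC [Hin [H0 [H1 Hlip]]]]]] Lx0.
  exists x0, H. split; auto. split; auto. split; auto. split; auto.
  intros t x Ht Lx eps Heps.
  exists (eps / (2 * (C + 1))). split.
  { apply Rdiv_lt_0_compat; lra. }
  intros s y Hs Ly Hts Hxy k Hk.
  set (dl := eps / (2 * (C + 1))) in *.
  assert (Hdl : 0 < dl) by (unfold dl; apply Rdiv_lt_0_compat; lra).
  assert (Hdl2 : dl * (2 * (C + 1)) = eps) by (unfold dl; field; lra).
  pose proof (Hlip t s x y dl Ht Hs Lx Ly ltac:(lra) ltac:(intros k' Hk'; left; auto) k Hk).
  assert (C * (Rabs (t - s) + dl) <= C * (2 * dl)) by (apply Rmult_le_compat_l; lra).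
  nra.
Qed.

Definition sg (s2 : list sign) (k : nat) : R := sgnR (nth k s2 Pos).
Definition Box (n : nat) (s2 : list sign) (x : nat -> R) : Prop :=
  forall k, (k < n)%nat -> sg s2 k * x k <= 0 /\ Rabs (x k) <= 1.

Lemma abs_le_iff a b : Rabs a <= b <-> - b <= a <= b.
Proof. unfold Rabs; destruct (Rcase_abs a); split; intros; lra. Qed.

Lemma zero_dec_spec r : zero_dec r = true <-> r = 0.
Proof. unfold zero_dec. destruct (Req_EM_T r 0); split; intros; congruence. Qed.

Lemma L_iff n s2 s1 x : sign_string s1 -> Lset n s2 s1 x <->
  (forall k, (n <= k)%nat -> x k = 0) /\ Box n s2 x /\ Adm' n s2 s1 (fun k => x k = 0).
Proof.
  intros Hs1. unfold Lset, zero_pattern. rewrite red_iff by auto. unfold Box, sg.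
  split; intros [A [B C]]; split; auto; split; auto; eapply Adm'_ext; try eassumption;
  intros k _; simpl; rewrite zero_dec_spec; tauto.
Qed.

Lemma sg_cases s2 k : sg s2 k = 1 \/ sg s2 k = -1.
Proof. unfold sg. destruct (nth k s2 Pos); simpl; auto. Qed.

Lemma seg_box n s2 x y t : Box n s2 x -> Box n s2 y -> 0 <= t <= 1 -> Box n s2 (seg t x y).
Proof.
  intros Hx Hy Ht k Hk. destruct (Hx k Hk) as [Hx1 Hx2]. destruct (Hy k Hk) as [Hy1 Hy2].
  rewrite abs_le_iff in *. unfold seg.
  destruct (sg_cases s2 k) as [E|E]; rewrite E in *; split; try split; nra.
Qed.

Lemma seg_zero n s2 x y t k : Box n s2 x -> Box n s2 y -> 0 < t < 1 -> (k < n)%nat ->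
  (seg t x y k = 0 <-> x k = 0 /\ y k = 0).
Proof.
  intros Hx Hy Ht Hk. destruct (Hx k Hk) as [Hx1 _]. destruct (Hy k Hk) as [Hy1 _]. unfold seg.
  destruct (sg_cases s2 k) as [E|E]; rewrite E in *; split; intros H.
  - assert ((1 - t) * x k <= 0) by nra. assert (t * y k <= 0) by nra.
    assert ((1 - t) * x k = 0) by nra. assert (t * y k = 0) by nra. split; nra.
  - destruct H as [-> ->]. ring.
  - assert ((1 - t) * x k >= 0) by nra. assert (t * y k >= 0) by nra.
    assert ((1 - t) * x k = 0) by nra. assert (t * y k = 0) by nra. split; nra.
  - destruct H as [-> ->]. ring.
Qed.

Lemma seg_in_L n s2 s1 x y t : sign_string s1 -> Lset n s2 s1 x ->
  (forall k, (n <= k)%nat -> y k = 0) -> Box n s2 y -> Adm' n s2 s1 (fun k => y k = 0) ->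
  Adm' n s2 s1 (fun k => x k = 0 /\ y k = 0) -> 0 <= t <= 1 -> Lset n s2 s1 (seg t x y).
Proof.
  intros Hs1 Lx Ty By Ay Axy Ht. apply L_iff in Lx as [Tx [Bx Ax]]; auto. apply L_iff; auto.
  split; [intros k Hk; unfold seg; rewrite Tx, Ty by auto; ring|].
  split; [apply seg_box; auto|].
  destruct (Req_dec t 0) as [->|h0].
  - eapply Adm'_ext; [|exact Ax]. intros k _. unfold seg. split; intro h; lra.
  - destruct (Req_dec t 1) as [->|h1].
    + eapply Adm'_ext; [|exact Ay]. intros k _. unfold seg. split; intro h; lra.
    + eapply Adm'_ext; [|exact Axy]. intros k Hk. rewrite seg_zero; eauto; [tauto|lra].
Qed.

Definition fmin (x : nat -> R) (l : list nat) : R := fold_right (fun i acc => Rmin (Rabs (x i)) acc) 1 l.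

Lemma fmin_bnd x l : 0 <= fmin x l <= 1.
Proof.
  induction l; simpl; [lra|]. unfold Rmin. destruct (Rle_dec _ _); pose proof (Rabs_pos (x a)); lra.
Qed.

Lemma fmin_zero x l : fmin x l = 0 <-> exists i, In i l /\ x i = 0.
Proof.
  induction l; simpl.
  - split; [lra|]. intros [i [[] _]].
  - pose proof (fmin_bnd x l). pose proof (Rabs_pos (x a)). unfold Rmin. destruct (Rle_dec _ _) as [Hle|Hnle].
    + split.
      * intros h. exists a. split; auto. destruct (Req_dec (x a) 0) as [h0|h0]; auto. apply Rabs_no_R0 in h0. lra.
      * intros [i [[<-|Hi] Hx]]; [rewrite Hx, Rabs_R0; auto|].
        assert (fmin x l = 0) by (apply IHl; eauto). fold (fmin x l) in *. lra.
    + fold (fmin x l). split.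
      * intros h. apply IHl in h as [i [? ?]]. eauto.
      * intros [i [[<-|Hi] Hx]]; [rewrite Hx, Rabs_R0 in Hnle; lra|]. apply IHl; eauto.
Qed.

Lemma fmin_lip x y l d : 0 <= d -> (forall i, In i l -> Rabs (x i - y i) <= d) -> Rabs (fmin x l - fmin y l) <= d.
Proof.
  intros Hd. induction l; intros H; simpl.
  - unfold Rminus. rewrite Rplus_opp_r, Rabs_R0. auto.
  - specialize (IHl ltac:(intros; apply H; simpl; auto)). fold (fmin x l) (fmin y l).
    pose proof (H a (or_introl eq_refl)).
    pose proof (Rabs_triang_inv (x a) (y a)). pose proof (Rabs_triang_inv (y a) (x a)).
    rewrite Rabs_minus_sym in H2.
    apply abs_le_iff. apply abs_le_iff in IHl. unfold Rmin. destruct (Rle_dec _ _); destruct (Rle_dec _ _); split; lra.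
Qed.


Definition ddl (s2 s1 : list sign) (lo : nat -> nat) (j k : nat) : list nat :=
  filter (fun i => sign_eqb (nth i s2 Pos) (nth j s1 Pos)) (seq (lo j) (k - lo j)).

Definition inR (n : nat) (s2 s1 : list sign) (lo : nat -> nat) (j k : nat) : bool :=
  (lo j <=? k)%nat && (k <? n)%nat && negb (sign_eqb (nth k s2 Pos) (nth j s1 Pos)).

Definition Gs (n : nat) (s2 s1 : list sign) (q lo : nat -> nat) (j : nat) (x : nat -> R) (k : nat) : R :=
  if Nat.eqb k (q j) then 0 else
  if inR n s2 s1 lo j k then (1 - fmin x (ddl s2 s1 lo j k)) * x k - fmin x (ddl s2 s1 lo j k) * sg s2 k
  else x k.

Lemma ddl_in s2 s1 lo j k i : In i (ddl s2 s1 lo j k) <-> ((lo j <= i < k)%nat /\ nth i s2 Pos = nth j s1 Pos).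
Proof.
  unfold ddl. rewrite filter_In, in_seq, sign_eqb_spec.
  split; intros [[? ?] ?]; repeat split; auto; lia.
Qed.

Lemma G_box n s2 s1 q lo j x : Box n s2 x -> Box n s2 (Gs n s2 s1 q lo j x).
Proof.
  intros Bx k Hk. unfold Gs. destruct (Nat.eqb k (q j)); [rewrite Rmult_0_r, Rabs_R0; lra|].
  destruct (inR _ _ _ _ _ _); [|auto].
  destruct (Bx k Hk) as [B1 B2]. rewrite abs_le_iff in *.
  pose proof (fmin_bnd x (ddl s2 s1 lo j k)). set (d := fmin x _) in *.
  destruct (sg_cases s2 k) as [E|E]; rewrite E in *; split; try split; nra.
Qed.

Lemma G_tail n s2 s1 q lo j x k : (q j < n)%nat -> (n <= k)%nat -> Gs n s2 s1 q lo j x k = x k.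
Proof.
  intros Hq Hk. unfold Gs, inR. destruct (Nat.eqb_spec k (q j)); [lia|].
  destruct (Nat.ltb_spec k n); [lia|]. rewrite Bool.andb_false_r. simpl. reflexivity.
Qed.

Lemma G_zero n s2 s1 q lo j x k : Box n s2 x -> (k < n)%nat ->
  (Gs n s2 s1 q lo j x k = 0 <-> k = q j \/ (x k = 0 /\ ~ Rem n s2 s1 lo (fun i => x i = 0) j k)).
Proof.
  intros Bx Hk. unfold Gs. destruct (Nat.eqb_spec k (q j)) as [E|E].
  - split; auto.
  - destruct (inR n s2 s1 lo j k) eqn:Ei.
    + unfold inR in Ei. apply Bool.andb_true_iff in Ei as [Ei Es]. apply Bool.andb_true_iff in Ei as [h1 h2].
      apply Nat.leb_le in h1. apply Nat.ltb_lt in h2. apply Bool.negb_true_iff in Es.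
      assert (Hne : nth k s2 Pos <> nth j s1 Pos) by (intro h; apply sign_eqb_spec in h; congruence).
      destruct (Bx k Hk) as [B1 B2].
      pose proof (fmin_bnd x (ddl s2 s1 lo j k)). pose proof (fmin_zero x (ddl s2 s1 lo j k)).
      set (d := fmin x _) in *.
      assert (Hz : (1 - d) * x k - d * sg s2 k = 0 <-> x k = 0 /\ d = 0).
      { destruct (sg_cases s2 k) as [E'|E']; rewrite E' in *; split; intros H1.
        - assert (Hd0 : d = 0) by nra. split; auto. rewrite Hd0 in H1. lra.
        - destruct H1 as [-> ->]. ring.
        - assert (Hd0 : d = 0) by nra. split; auto. rewrite Hd0 in H1. lra.
        - destruct H1 as [-> ->]. ring. }
      rewrite Hz. split.
      * intros [Hx Hd]. right. split; auto. intros [_ [_ [_ HR]]]. apply HR.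
        apply H0 in Hd as [i [Hi Hxi]]. apply ddl_in in Hi. exists i. tauto.
      * intros [|[Hx HR]]; [congruence|]. split; auto. apply H0.
        destruct (notRem n s2 s1 lo (fun i => x i = 0) j k h1 h2 Hne HR) as [i [? [? ?]]].
        exists i. split; auto. apply ddl_in. auto.
    + assert (HnR : ~ Rem n s2 s1 lo (fun i => x i = 0) j k).
      { intros [h1 [h2 [h3 _]]]. unfold inR in Ei.
        apply Nat.leb_le in h1. apply Nat.ltb_lt in h2. rewrite h1, h2 in Ei. simpl in Ei.
        apply Bool.negb_false_iff in Ei. apply sign_eqb_spec in Ei. auto. }
      split; [intros ->; right; auto|]. intros [|[? _]]; auto; congruence.
Qed.

Lemma G_lip n s2 s1 q lo j x y d : Box n s2 x -> Box n s2 y -> 0 <= d -> dist_le n x y d ->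
  dist_le n (Gs n s2 s1 q lo j x) (Gs n s2 s1 q lo j y) (4 * d).
Proof.
  intros Bx By Hd Hxy k Hk. unfold Gs.
  destruct (Nat.eqb k (q j)); [unfold Rminus; rewrite Rplus_opp_r, Rabs_R0; lra|].
  pose proof (Hxy k Hk) as H1.
  destruct (inR n s2 s1 lo j k) eqn:Ei; [|lra].
  assert (Hdl : Rabs (fmin x (ddl s2 s1 lo j k) - fmin y (ddl s2 s1 lo j k)) <= d).
  { apply fmin_lip; auto. intros i Hi. apply ddl_in in Hi. unfold inR in Ei.
    apply Bool.andb_true_iff in Ei as [Ei _]. apply Bool.andb_true_iff in Ei as [_ Ei]. apply Nat.ltb_lt in Ei.
    apply Hxy. lia. }
  pose proof (fmin_bnd x (ddl s2 s1 lo j k)). pose proof (fmin_bnd y (ddl s2 s1 lo j k)).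
  set (dx := fmin x _) in *. set (dy := fmin y _) in *.
  destruct (Bx k Hk) as [_ Bx2]. destruct (By k Hk) as [_ By2].
  rewrite abs_le_iff in *.
  destruct (sg_cases s2 k) as [E|E]; rewrite E; split; nra.
Qed.

Lemma G_bnd n s2 s1 q lo j x : Box n s2 x -> dist_le n (Gs n s2 s1 q lo j x) x 2.
Proof.
  intros Bx k Hk. pose proof (G_box n s2 s1 q lo j x Bx k Hk) as [_ H1]. destruct (Bx k Hk) as [_ H2].
  rewrite abs_le_iff in *. split; lra.
Qed.

Lemma ContrOn_sub n (L A A2 : (nat -> R) -> Prop) x0 : (forall x, A x -> A2 x) -> ContrOn n L A2 x0 -> ContrOn n L A x0.
Proof.
  intros HA [H [C [HC [H1 [H2 [H3 H4]]]]]]. exists H, C. repeat split; auto.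
Qed.

Theorem lemma1p15 (n : nat) (sigma2 sigma1 : list sign) :
  length sigma2 = n ->
  ext_string sigma2 ->
  sign_string sigma1 ->
  substring sigma1 sigma2 ->
  contractible n (Lset n sigma2 sigma1).
Proof.
  intros Hn Hext Hs1 Hsub.
  set (s2 := sigma2) in *. set (s1 := sigma1) in *.
  set (m := length s1).
  set (q := qq s2 s1 n). set (lo' := lo s2 s1 n).
  assert (HQ : Qgood n s2 s1 q lo') by (apply qgood_exists; auto).
  pose proof HQ as [HQ1 [Hlo0 HloS]].
  set (L := Lset n s2 s1).
  set (x0 := fun k => if (k <? n)%nat then (if existsb (fun i => Nat.eqb (q i) k) (seq 0 m) then 0 else - sg s2 k) else 0).
  assert (X0t : forall k, (n <= k)%nat -> x0 k = 0).
  { intros k Hk. unfold x0. destruct (Nat.ltb_spec k n); [lia|auto]. }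
  assert (X0z : forall k, (k < n)%nat -> (x0 k = 0 <-> exists i, (i < m)%nat /\ q i = k)).
  { intros k Hk. unfold x0. destruct (Nat.ltb_spec k n); [|lia].
    destruct (existsb (fun i => Nat.eqb (q i) k) (seq 0 m)) eqn:E.
    - apply existsb_exists in E as [i [Hi Hq]]. apply in_seq in Hi. apply Nat.eqb_eq in Hq.
      split; auto. intros _. exists i. split; [lia|auto].
    - split.
      + intros h. destruct (sg_cases s2 k) as [e|e]; rewrite e in h; lra.
      + intros [i [Hi Hq]]. exfalso. assert (existsb (fun i => Nat.eqb (q i) k) (seq 0 m) = true); [|congruence].
        apply existsb_exists. exists i. split; [apply in_seq; lia| apply Nat.eqb_eq; auto]. }
  assert (X0b : Box n s2 x0).
  { intros k Hk. unfold x0. destruct (Nat.ltb_spec k n); [|lia].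
    destruct (existsb _ _); [rewrite Rmult_0_r, Rabs_R0; lra|].
    rewrite abs_le_iff. destruct (sg_cases s2 k) as [e|e]; rewrite e; split; try split; lra. }
  assert (X0a : Adm' n s2 s1 (fun k => x0 k = 0)).
  { eapply Adm'_ext; [|apply (admQ n s2 s1 q lo' HQ)]. intros k Hk. rewrite X0z by auto. tauto. }
  assert (Lx0 : L x0) by (apply L_iff; auto).
  set (Inv := fun j x => L x /\ forall i, (i < j)%nat -> x (q i) = 0).
  assert (Hmain : forall j', (j' <= m)%nat -> ContrOn n L (Inv (m - j')%nat) x0).
  { induction j' as [|j' IH]; intros Hj'.
    - rewrite Nat.sub_0_r. apply contr_base.
      + intros t x Ht [Lx HZ]. apply seg_in_L; auto.
        pose proof Lx as Lx'. apply L_iff in Lx' as [_ [_ [C HC]]]; auto.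
        eapply Adm'_ext; [|apply (stepQ n s2 s1 q lo' (fun k => x k = 0) C HQ Hs1 HC HZ)].
        intros k Hk. rewrite X0z by auto. split; [|tauto].
        intros [i [Hi <-]]. split; [apply HZ; auto|]. exists i; auto.
      + intros x [Lx _] k Hk. apply L_iff in Lx as [_ [Bx _]]; auto.
        destruct (Bx k Hk) as [_ B1]. destruct (X0b k Hk) as [_ B2].
        rewrite abs_le_iff in *. split; lra.
    - set (j := (m - S j')%nat).
      assert (Hj : (j < m)%nat) by (unfold j; lia).
      assert (Ej : (m - j')%nat = S j) by (unfold j; lia).
      rewrite Ej in IH. specialize (IH ltac:(lia)).
      set (G := Gs n s2 s1 q lo' j).
      destruct (HQ1 j Hj) as [Hq1 [Hq2 [Hq3 Hq4]]].
      assert (Hinter : forall x, Inv j x -> Adm' n s2 s1 (fun k => x k = 0 /\ G x k = 0) /\ Adm' n s2 s1 (fun k => G x k = 0)).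
      { intros x [Lx HZ]. pose proof Lx as Lx'. apply L_iff in Lx' as [_ [Bx [C HC]]]; auto. split.
        - exists C. eapply (step1 n s2 s1 q lo' (fun k => x k = 0) C j) in HC; auto.
          destruct HC as [HC1 [HC2 HC3]]. set (Z' := fun k => x k = 0 /\ G x k = 0).
          assert (EZ : forall k, (k < n)%nat -> (Z' k <-> x k = 0 /\ ~ Rem n s2 s1 lo' (fun i => x i = 0) j k)).
          { intros k Hk. unfold Z', G. rewrite G_zero by auto. split.
            - intros [Hx [->|H2]]; [|auto]. split; auto. intros [_ [_ [h _]]]. auto.
            - intros [Hx HR]. split; auto. }
          split; [|split].
          + intros k Hk HZk. apply HC1; auto. apply EZ; auto.
          + intros k k' ? ? Z1 Z2. apply HC2; auto; apply EZ; auto; lia.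
          + intros l Hl. destruct (HC3 l Hl) as [k [? [? ?]]]. exists k. split; auto. split; auto. apply EZ; auto.
        - eapply Adm'_ext; [|apply (step2 n s2 s1 q lo' (fun k => x k = 0) C j HQ Hs1 HC Hj HZ)].
          intros k Hk. unfold G. rewrite G_zero by auto. tauto. }
      apply (contr_concat n L (Inv j) (Inv (S j)) x0 G 4 2 IH); try lra.
      + intros x Ix. pose proof (Hinter x Ix) as [_ HA]. destruct Ix as [Lx HZ].
        pose proof Lx as Lx'. apply L_iff in Lx' as [Tx [Bx _]]; auto.
        split.
        * apply L_iff; auto. split; [|split; auto].
          -- intros k Hk. unfold G. rewrite G_tail by auto. auto.
          -- apply G_box; auto.
        * intros i Hi. destruct (Nat.eq_dec i j) as [->|Hne].
          -- unfold G, Gs. rewrite Nat.eqb_refl. reflexivity.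
          -- unfold G. apply G_zero; auto. apply HQ1; lia. right. split; [apply HZ; lia|].
             intros [HR _]. destruct j as [|j'']; [lia|]. rewrite HloS in HR.
             destruct (Nat.eq_dec i j''); [subst; lia|].
             pose proof (qgood_mono n s2 s1 q lo' HQ i j'' ltac:(lia)). lia.
      + intros t x Ht Ix. pose proof (Hinter x Ix) as [HA1 HA2]. destruct Ix as [Lx HZ].
        pose proof Lx as Lx'. apply L_iff in Lx' as [Tx [Bx _]]; auto.
        apply seg_in_L; auto.
        * intros k Hk. unfold G. rewrite G_tail by auto. auto.
        * apply G_box; auto.
      + intros x y d [Lx _] [Ly _] Hd Hxy. apply L_iff in Lx as [_ [Bx _]]; auto.
        apply L_iff in Ly as [_ [By _]]; auto. apply G_lip; auto.
      + intros x [Lx _]. apply L_iff in Lx as [_ [Bx _]]; auto. apply G_bnd; auto. }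
  specialize (Hmain m ltac:(lia)). rewrite Nat.sub_diag in Hmain.
  apply (contr_final n L x0); auto.
  apply (ContrOn_sub n L L (Inv 0%nat)); auto.
  intros x Lx. split; auto. intros; lia.
Qed.
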